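(* Let $\alpha_1\ge\alpha_2\ge\dots>0$ with $\sum_n\alpha_n<\infty$, set $R_n=\sum_{i=n+1}^\infty\alpha_i$ for $n\ge0$, and assume $\alpha_n>R_n$ for every $n\ge1$. Let $\rho$ be the law of $\sum_{j=1}^\infty\varepsilon_j\alpha_j$, where $(\varepsilon_j)$ are i.i.d. with $\mathbb P[\varepsilon_j=1]=\mathbb P[\varepsilon_j=-1]=\frac12$ (equivalently, the infinite convolution of the measures $\frac12(\delta_{\alpha_n}+\delta_{-\alpha_n})$). Then for every integer $n\ge0$: (i) if $I$ is an interval of length $|I|<R_n$, then $\rho(I)\le2^{-n}$; (ii) if $\delta>0$ and $R_n<\frac\delta4$, then $\rho((\lambda-\delta,\lambda+\delta))\ge2^{-n}$ for every $\lambda$ in the support of $\rho$. *)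

(* Defs.v *)
From HB Require Import structures.
From mathcomp Require Import all_boot all_order all_algebra.
From mathcomp Require Import all_classical all_reals all_analysis.
Set Implicit Arguments. Unset Strict Implicit. Unset Printing Implicit Defensive.
Import Order.TTheory GRing.Theory Num.Theory.
Import numFieldNormedType.Exports.
Local Open Scope classical_set_scope.
Local Open Scope ring_scope.

Definition mutually_independent d (T : measurableType d) (R : realType)
  (P : probability T R) (X : nat -> T -> R) : Prop :=
  forall (F : seq nat) (B : nat -> set R),
    uniq F -> (forall j, measurable (B j)) ->
    P (\bigcap_(j in [set` F]) (X j @^-1` B j)) =
    (\prod_(j <- F) P (X j @^-1` B j))%E.

Definition rademacher d (T : measurableType d) (R : realType)
  (P : probability T R) (X : T -> R) : Prop :=
  measurable_fun setT X /\
  (forall t, X t = 1 \/ X t = -1) /\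
  P (X @^-1` [set 1]) = (2^-1 : R)%:E /\
  P (X @^-1` [set -1]) = (2^-1 : R)%:E.

Definition rsum (R : realType) (T : Type) (alpha : nat -> R) (eps : nat -> T -> R)
  (t : T) : R :=
  limn (fun N => \sum_(1 <= j < N.+1) eps j t * alpha j).

Definition tail (R : realType) (alpha : nat -> R) (n : nat) : R :=
  limn (fun N => \sum_(n.+1 <= i < N) alpha i).

(* Support of a measure on R: points all of whose open neighbourhoods have
   positive measure (= complement of the largest open null set). *)
Definition msupport (R : realType) (mu : set R -> \bar R) : set R :=
  [set x | forall U : set R, open U -> U x -> (0 < mu U)%E].

(* Main.v *)
Require Import Defs.
From HB Require Import structures.
From mathcomp Require Import all_boot all_order all_algebra.
From mathcomp Require Import all_classical all_reals all_analysis.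
From mathcomp Require Import ring lra.
Import Order.TTheory GRing.Theory Num.Theory.
Import numFieldNormedType.Exports.
Local Open Scope classical_set_scope.
Local Open Scope ring_scope.

Lemma sum_nat_ge0 (R : realType) (f : nat -> R) m N :
  (forall i, (m <= i)%N -> 0 <= f i) -> 0 <= \sum_(m <= i < N) f i.
Proof.
move=> f0; rewrite big_seq sumr_ge0 // => i; rewrite mem_index_iota => /andP[hi _]; exact: f0.
Qed.

Lemma sum_nat_mono_hi (R : realType) (f : nat -> R) m N M :
  (forall i, (m <= i)%N -> 0 <= f i) -> (N <= M)%N ->
  \sum_(m <= i < N) f i <= \sum_(m <= i < M) f i.
Proof.
move=> f0 NM; case: (leqP m N) => mN.
  rewrite (big_cat_nat mN NM) /= lerDl.
  apply: sum_nat_ge0 => i hi; apply: f0; exact: leq_trans hi.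
rewrite big_geq ?(ltnW mN) //; exact: sum_nat_ge0.
Qed.

Lemma sum_nat_mono_lo (R : realType) (f : nat -> R) m m' N :
  (forall i, (m <= i)%N -> 0 <= f i) -> (m <= m')%N ->
  \sum_(m' <= i < N) f i <= \sum_(m <= i < N) f i.
Proof.
move=> f0 mm; case: (leqP m' N) => mN.
  rewrite (big_cat_nat mm mN) /= lerDr; exact: sum_nat_ge0.
rewrite big_geq ?(ltnW mN) //; exact: sum_nat_ge0.
Qed.

Lemma mono_bound (R : realType) (u : nat -> R) (B : R) :
  nondecreasing_seq u -> (forall N, u N <= B) ->
  [/\ cvgn u, forall N, u N <= limn u & limn u <= B].
Proof.
move=> nd ub.
have cu : cvgn u by apply: nondecreasing_is_cvgn => //; exists B => _ [n _ <-].
split => //; first exact: nondecreasing_cvgn_le.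
apply: limr_le => //; exact: nearW.
Qed.

Section Proof6.
Context (R : realType) (d : measure_display) (T : measurableType d)
  (P : probability T R) (alpha : nat -> R) (eps : nat -> T -> R).
Hypothesis alpha_pos : forall n, (1 <= n)%N -> 0 < alpha n.
Hypothesis alpha_summable : cvgn (fun N => \sum_(1 <= j < N.+1) alpha j).
Hypothesis alpha_gt_tail : forall n, (1 <= n)%N -> tail alpha n < alpha n.
Hypothesis eps_rad : forall j, rademacher P (eps j).
Hypothesis eps_indep : mutually_independent P eps.

Let Asum := limn (fun N => \sum_(1 <= j < N.+1) alpha j).

Let alpha_ge0 i : (1 <= i)%N -> 0 <= alpha i.
Proof. by move=> h; apply: ltW; exact: alpha_pos. Qed.

Let eps_pm t j : eps j t = 1 \/ eps j t = -1.
Proof. by have [_ [h _]] := eps_rad j; exact: h. Qed.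

Let psum_le N : \sum_(1 <= j < N.+1) alpha j <= Asum.
Proof.
apply: nondecreasing_cvgn_le => //.
by move=> m n mn; apply: sum_nat_mono_hi.
Qed.

Let Tk_le_Asum k N : \sum_(k.+1 <= i < N) alpha i <= Asum.
Proof.
apply: le_trans (psum_le N).
have h1 := @sum_nat_mono_hi R alpha 1 N N.+1 alpha_ge0 (leqnSn N).
have h2 := @sum_nat_mono_lo R alpha 1 k.+1 N alpha_ge0 isT.
exact: le_trans h2 h1.
Qed.

Let tail_facts k :
  [/\ cvgn (fun N => \sum_(k.+1 <= i < N) alpha i),
      forall N, \sum_(k.+1 <= i < N) alpha i <= tail alpha k
    & tail alpha k <= Asum].
Proof.
apply: mono_bound; last exact: Tk_le_Asum.
move=> m n mn; apply: sum_nat_mono_hi => // i hi; apply: alpha_ge0.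
exact: leq_trans hi.
Qed.

Let tail_ge0 k : 0 <= tail alpha k.
Proof.
have [_ h _] := tail_facts k; apply: le_trans (h 0%N).
by rewrite big_geq.
Qed.

Let tail_lt n : tail alpha n < 2 * alpha n.+1.
Proof.
have nd : nondecreasing_seq (fun N => \sum_(n.+1 <= i < N) alpha i).
  move=> m k mk; apply: sum_nat_mono_hi => // i hi; apply: alpha_ge0.
  exact: leq_trans hi.
have ub : forall N, \sum_(n.+1 <= i < N) alpha i <= alpha n.+1 + tail alpha n.+1.
  move=> N; case: (ltnP n.+1 N) => hN.
    rewrite big_ltn // lerD2l; have [_ h _] := tail_facts n.+1; exact: h.
  rewrite big_geq //; apply: addr_ge0 => //; exact: alpha_ge0.
have [_ _ h] := @mono_bound R _ _ nd ub.
apply: le_lt_trans h _.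
have := alpha_gt_tail n.+1 isT; lra.
Qed.

Let sig_cvg t : cvgn (fun N => \sum_(1 <= j < N.+1) eps j t * alpha j).
Proof.
pose D N := \sum_(1 <= j < N.+1) (1 - eps j t) * alpha j.
have D0 j : (1 <= j)%N -> 0 <= (1 - eps j t) * alpha j.
  move=> hj; apply: mulr_ge0; last exact: alpha_ge0.
  by case: (eps_pm t j) => ->; lra.
have ndD : nondecreasing_seq D.
  by move=> m n mn; apply: sum_nat_mono_hi.
have ubD N : D N <= 2 * Asum.
  apply: le_trans (_ : 2 * \sum_(1 <= j < N.+1) alpha j <= _); last first.
    by rewrite ler_pM2l //; exact: psum_le.
  rewrite mulr_sumr; apply: ler_sum_nat => j /andP[hj _].
  have := alpha_ge0 _ hj; case: (eps_pm t j) => ->; lra.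
have [cD _ _] := @mono_bound R _ _ ndD ubD.
have -> : (fun N => \sum_(1 <= j < N.+1) eps j t * alpha j) =
  (fun N => \sum_(1 <= j < N.+1) alpha j) - D.
  apply/funext => N /=; rewrite /D !fctE -sumrB; apply: eq_bigr => j _; ring.
exact: is_cvgB.
Qed.

Let rsum_cvg t : (fun N => \sum_(1 <= j < N.+1) eps j t * alpha j) @ \oo
   --> rsum alpha eps t.
Proof. exact: sig_cvg. Qed.

Let rsum_meas : measurable_fun setT (rsum alpha eps).
Proof.
apply: (measurable_realfun.measurable_fun_cvg
  (h := fun N t => \sum_(1 <= j < N.+1) eps j t * alpha j)).
  move=> N; apply: measurable_sum => j.
  apply: measurable_realfun.measurable_funM; first exact: (eps_rad j).1.
  exact: measurable_cst.
by move=> t _; exact: rsum_cvg.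
Qed.

Let diff_cvg t t' :
  (fun N => \sum_(1 <= j < N.+1) (eps j t - eps j t') * alpha j) @ \oo
   --> rsum alpha eps t - rsum alpha eps t'.
Proof.
suff -> : (fun N => \sum_(1 <= j < N.+1) (eps j t - eps j t') * alpha j) =
  (fun N => \sum_(1 <= j < N.+1) eps j t * alpha j) -
  (fun N => \sum_(1 <= j < N.+1) eps j t' * alpha j).
  exact: cvgB.
apply/funext => N /=; rewrite !fctE -sumrB; apply: eq_bigr => j _; ring.
Qed.

Let key t t' n k : (1 <= k <= n)%N ->
  (forall j, (1 <= j < k)%N -> eps j t = eps j t') ->
  eps k t = 1 -> eps k t' = -1 -> eps n.+1 t = eps n.+1 t' ->
  2 * alpha n.+1 < rsum alpha eps t - rsum alpha eps t'.
Proof.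
move=> /andP[k1 kn] eqt ek ek' en.
pose h j := (eps j t - eps j t') * alpha j + 2 * alpha j.
have h0 j : (1 <= j)%N -> 0 <= h j.
  move=> hj; have := alpha_ge0 _ hj; rewrite /h.
  by case: (eps_pm t j) => ->; case: (eps_pm t' j) => ->; lra.
have [_ Tt _] := tail_facts k.
have lb N : (n < N)%N -> 2 * alpha k - 2 * tail alpha k + 2 * alpha n.+1 <=
   \sum_(1 <= j < N.+1) (eps j t - eps j t') * alpha j.
  move=> nN.
  have kN : (k <= N.+1)%N by apply: leq_trans kn _; apply: leq_trans (ltnW nN) _.
  rewrite (big_cat_nat k1 kN) /=.
  rewrite [X in _ <= X + _]big_nat_cond big1 ?add0r; last first.
    by move=> j /andP[hj _]; rewrite eqt // subrr mul0r.
  rewrite big_ltn; last by apply: leq_ltn_trans kn _; apply: leq_trans (ltnW nN) _.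
  rewrite ek ek'.
  have -> : \sum_(k.+1 <= j < N.+1) (eps j t - eps j t') * alpha j =
     \sum_(k.+1 <= j < N.+1) h j - 2 * \sum_(k.+1 <= j < N.+1) alpha j.
    by rewrite mulr_sumr -sumrB; apply: eq_bigr => j _; rewrite /h addrK.
  have hs : 2 * alpha n.+1 <= \sum_(k.+1 <= j < N.+1) h j.
    have kn1 : (k.+1 <= n.+1)%N by [].
    have nN1 : (n.+1 <= N.+1)%N by apply: ltnW.
    rewrite (big_cat_nat kn1 nN1) /= (@big_ltn _ _ _ n.+1 N.+1) //.
    have -> : h n.+1 = 2 * alpha n.+1 by rewrite /h en subrr mul0r add0r.
    have s1 : 0 <= \sum_(k.+1 <= j < n.+1) h j.
      by apply: sum_nat_ge0 => i hi; apply: h0; apply: leq_trans hi.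
    have s2 : 0 <= \sum_(n.+2 <= j < N.+1) h j.
      by apply: sum_nat_ge0 => i hi; apply: h0; apply: leq_trans hi.
    lra.
  have := Tt N.+1; lra.
have hc : 2 * alpha k - 2 * tail alpha k + 2 * alpha n.+1 <=
    rsum alpha eps t - rsum alpha eps t'.
  apply: (cvgr_to_ge (diff_cvg t t')).
  near=> N; apply: lb; near: N; exact: nbhs_infty_gt.
have := alpha_gt_tail k k1; lra.
Unshelve. all: by end_near.
Qed.

Let prefix t t' n :
  rsum alpha eps t - rsum alpha eps t' < tail alpha n ->
  rsum alpha eps t' - rsum alpha eps t < tail alpha n ->
  eps n.+1 t = eps n.+1 t' ->
  forall j, (1 <= j <= n)%N -> eps j t = eps j t'.
Proof.
move=> h1 h2 en.
have tl := tail_lt n.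
pose Q := fun j => ((1 <= j <= n)%N && (eps j t != eps j t')).
have [[j0 Qj0]|none] := pselect (exists j, Q j); last first.
  move=> j hj; apply/eqP/negPn/negP => ne; apply: none; exists j.
  by rewrite /Q hj ne.
exfalso.
case: (ex_minnP (ex_intro Q j0 Qj0)) => k /andP[hk ne] kmin.
have eqt : forall j, (1 <= j < k)%N -> eps j t = eps j t'.
  move=> j /andP[j1 jk]; apply/eqP/negPn/negP => nej.
  have : (k <= j)%N.
    apply: kmin; rewrite /Q nej andbT j1 /=.
    case/andP: hk => _ kn; exact: leq_trans (ltnW jk) kn.
  by rewrite leqNgt jk.
case: (eps_pm t k) => ek; case: (eps_pm t' k) => ek'.
- by move: ne; rewrite ek ek' eqxx.
- have := @key t t' n k hk eqt ek ek' en; lra.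
- have := @key t' t n k hk (fun j hj => esym (eqt j hj)) ek' ek (esym en); lra.
- by move: ne; rewrite ek ek' eqxx.
Qed.

Let close t t0 n : (forall j, (1 <= j <= n)%N -> eps j t = eps j t0) ->
  `|rsum alpha eps t - rsum alpha eps t0| <= 2 * tail alpha n.
Proof.
move=> eqt.
have [_ Tt _] := tail_facts n.
have bd N : (n <= N)%N ->
  `|\sum_(1 <= j < N.+1) (eps j t - eps j t0) * alpha j| <= 2 * tail alpha n.
  move=> nN.
  rewrite (@big_cat_nat _ _ _ n.+1) //=.
  rewrite big_nat_cond big1 ?add0r; last first.
    by move=> j /andP[hj _]; rewrite eqt // subrr mul0r.
  apply: le_trans (ler_norm_sum _ _ _) _.
  apply: le_trans (_ : \sum_(n.+1 <= j < N.+1) 2 * alpha j <= _).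
    apply: ler_sum_nat => j /andP[hj _].
    have a0 := alpha_ge0 j (leq_ltn_trans (leq0n n) hj).
    have ne : `|eps j t - eps j t0| <= 2.
      apply: le_trans (ler_normB _ _) _.
      by case: (eps_pm t j) => ->; case: (eps_pm t0 j) => ->;
        rewrite ?normrN normr1; lra.
    rewrite normrM (ger0_norm a0); nra.
  by rewrite -mulr_sumr ler_pM2l //; exact: Tt.
rewrite ler_norml; apply/andP; split.
  apply: (cvgr_to_ge (diff_cvg t t0)); near=> N.
  have nN : (n <= N)%N by near: N; exact: nbhs_infty_ge.
  by have := bd N nN; rewrite ler_norml => /andP[].
apply: (cvgr_to_le (diff_cvg t t0)); near=> N.
have nN : (n <= N)%N by near: N; exact: nbhs_infty_ge.
by have := bd N nN; rewrite ler_norml => /andP[].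
Unshelve. all: by end_near.
Qed.

Let cyl t0 m := \bigcap_(j in [set` iota 1 m]) (eps j @^-1` [set eps j t0]).

Let cyl_meas t0 m : measurable (cyl t0 m).
Proof.
case: m => [|m].
  have -> : cyl t0 0 = setT by apply/seteqP; split => // x _ j.
  exact: measurableT.
apply: bigcap_measurable.
  by exists 1%N; rewrite /= inE eqxx.
move=> j _; have := (eps_rad j).1 measurableT [set eps j t0] (measurable_set1 (eps j t0)).
by rewrite setTI.
Qed.

Let cyl_prob t0 m : P (cyl t0 m) = ((2^-1) ^+ m)%:E.
Proof.
rewrite /cyl (eps_indep (iota 1 m) (fun j => [set eps j t0])); last first.
- by move=> j; exact: measurable_set1.
- exact: iota_uniq.
rewrite (eq_bigr (fun=> (2^-1)%:E)); last first.
  move=> j _; case: (eps_pm t0 j) => ->.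
    exact: (eps_rad j).2.2.1.
  exact: (eps_rad j).2.2.2.
rewrite prodEFin; congr EFin.
rewrite big_const_seq count_predT size_iota.
by elim: m => [//|m IH] /=; rewrite IH exprS.
Qed.

Lemma main_i n (a b : R) (b1 b2 : bool) : a <= b -> b - a < tail alpha n ->
  (P (rsum alpha eps @^-1` [set` Interval (BSide b1 a) (BSide b2 b)])
    <= (2 ^- n : R)%:E)%E.
Proof.
move=> hab hlen.
have inA' t : rsum alpha eps t \in Interval (BSide b1 a) (BSide b2 b) ->
    a <= rsum alpha eps t <= b.
  rewrite in_itv /=.
  by case: b1; case: b2 => /= /andP[h1 h2]; apply/andP; split => //; apply: ltW.
set A := rsum alpha eps @^-1` _.
have mA : measurable A.
  have := rsum_meas measurableT _ (measurable_itv (Interval (BSide b1 a) (BSide b2 b))).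
  by rewrite setTI.
have inA t : A t -> a <= rsum alpha eps t <= b by exact: inA'.
pose Es s := eps n.+1 @^-1` [set s].
have mE s : measurable (Es s).
  have := (eps_rad n.+1).1 measurableT [set s] (measurable_set1 s).
  by rewrite setTI.
have Q s : (P (A `&` Es s) <= ((2^-1) ^+ n.+1)%:E)%E.
  have [[t0 [At0 Et0]]|emp] := pselect (A `&` Es s !=set0).
    apply: le_trans (_ : P (cyl t0 n.+1) <= _)%E; last by rewrite cyl_prob.
    apply: le_measure; rewrite ?inE; [exact: measurableI | exact: cyl_meas | ].
    move=> t [At Et] j hj.
    have /andP[j1 jn] : (1 <= j < 1 + n.+1)%N by rewrite -mem_iota.
    rewrite /=.
    have [->|jne] := eqVneq j n.+1; first by rewrite Et Et0.
    have := inA t At; have := inA t0 At0 => /andP[c1 c2] /andP[c3 c4].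
    apply: (@prefix t t0 n); [lra | lra | by rewrite Et Et0 | ].
    rewrite j1 /=; move: jn jne; rewrite add1n ltnS leq_eqVlt => /orP[->//|].
    by rewrite ltnS.
  have -> : A `&` Es s = set0.
    by apply/seteqP; split => // x hx; apply: emp; exists x.
  by rewrite measure0 lee_fin; apply: exprn_ge0; lra.
apply: (@le_trans _ _ (P (A `&` Es 1 `|` A `&` Es (-1)))).
  apply: le_measure; rewrite ?inE.
  - exact: mA.
  - by apply: measurableU; apply: measurableI.
  - by move=> t At; case: (eps_pm t n.+1) => e; [left|right]; split.
apply: le_trans (measureU2 _ _ _) _; try by apply: measurableI.
apply: le_trans (leeD (Q 1) (Q (-1))) _.
rewrite -EFinD lee_fin -exprVn exprS.
set y := 2^-1 ^+ n; lra.
Qed.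

Lemma main_ii n (delta : R) : 0 < delta -> tail alpha n < delta / 4 ->
  forall lambda, msupport (fun A => P (rsum alpha eps @^-1` A)) lambda ->
  lee (2 ^- n : R)%:E (P (rsum alpha eps @^-1` `]lambda - delta, lambda + delta[%classic)).
Proof.
move=> hd ht lambda hsup.
have tg := tail_ge0 n.
have := hsup `]lambda - delta/2, lambda + delta/2[%classic (itv_open _ _).
have hl : `]lambda - delta/2, lambda + delta/2[%classic lambda.
  by rewrite /= in_itv /=; apply/andP; split; lra.
move=> /(_ hl) hpos.
have [[t0 Ut0]|emp] := pselect
   (rsum alpha eps @^-1` `]lambda - delta/2, lambda + delta/2[%classic !=set0); last first.
  exfalso; move: hpos.
  have -> : rsum alpha eps @^-1` `]lambda - delta/2, lambda + delta/2[%classic = set0.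
    by apply/seteqP; split => // x hx; apply: emp; exists x.
  by rewrite measure0 ltxx.
rewrite -exprVn -(cyl_prob t0).
apply: le_measure; rewrite ?inE.
- exact: cyl_meas.
- have := rsum_meas measurableT _ (measurable_itv `]lambda - delta, lambda + delta[%R).
  by rewrite setTI.
move=> t ct.
have := @close t t0 n.
have eqt : forall j, (1 <= j <= n)%N -> eps j t = eps j t0.
  move=> j /andP[j1 jn]; apply: (ct j).
  by change (j \in iota 1 n); rewrite mem_iota j1 add1n ltnS.
move=> /(_ eqt); rewrite ler_norml => /andP[c1 c2].
move: Ut0; rewrite /= !in_itv /= => /andP[u1 u2]; apply/andP; split; lra.
Qed.

End Proof6.

Theorem lemma6p6 (R : realType) (d : measure_display) (T : measurableType d)
  (P : probability T R) (alpha : nat -> R) (eps : nat -> T -> R)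
  (alpha_pos : forall n, (1 <= n)%N -> 0 < alpha n)
  (alpha_noninc : forall n, (1 <= n)%N -> alpha n.+1 <= alpha n)
  (alpha_summable : cvgn (fun N => \sum_(1 <= j < N.+1) alpha j))
  (alpha_gt_tail : forall n, (1 <= n)%N -> tail alpha n < alpha n)
  (eps_rad : forall j, rademacher P (eps j))
  (eps_indep : mutually_independent P eps) :
  let rho := fun A : set R => P (rsum alpha eps @^-1` A) in
  forall n : nat,
    (forall (a b : R) (b1 b2 : bool), a <= b ->
       b - a < tail alpha n ->
       lee (rho [set` Interval (BSide b1 a) (BSide b2 b)]) (2 ^- n : R)%:E)
    /\
    (forall delta : R, 0 < delta -> tail alpha n < delta / 4 ->
       forall lambda, msupport rho lambda ->
       (lee (2 ^- n : R)%:E (rho `]lambda - delta, lambda + delta[%classic))).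
Proof.
move=> rho n; split.
- by move=> a b b1 b2 hab hlen; apply: main_i.
- by move=> delta hd ht lambda hs; apply: main_ii.
Qed.
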